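(* Let $\mathcal N=(\mathcal S,\mathcal C,\mathcal R)$ be a chemical reaction network and $\tilde{\mathcal N}=(\mathcal S,\tilde{\mathcal C},\mathcal{CR}_K,\tilde{\mathcal R})$ a strong translation of $\mathcal N$. Then the stoichiometric subspaces of $\mathcal N$ and of $\tilde{\mathcal N}$ coincide, and the kinetic-order subspace $\tilde S$ of $\tilde{\mathcal N}$ is $$\tilde S=\mathrm{span}\left\{\bigcup_{k=1}^{\tilde\ell}\{y_p-y_q:\ p,q\in\mathcal{CR}_K,\ h_2(p),h_2(q)\in\tilde{\mathcal L}_k\}\right\},$$ where $\tilde{\mathcal L}_1,\dots,\tilde{\mathcal L}_{\tilde\ell}$ are the linkage classes of $\tilde{\mathcal N}$.
   Context: A chemical reaction network $\mathcal N=(\mathcal S,\mathcal C,\mathcal R)$ consists of species $\mathcal A_1,\dots,\mathcal A_m$, pairwise distinct complexes $\mathcal C_1,\dots,\mathcal C_n$ with stoichiometric vectors $y_1,\dots,y_n\in\mathbb Z^m_{\ge 0}$, and reactions $\mathcal R_i:\mathcal C_{\rho(i)}\to\mathcal C_{\rho'(i)}$, $i=1,\dots,r$, $\rho(i)\neq\rho'(i)$; every species appears in some complex and every complex in some reaction. Complexes are identified with their indices; $\mathcal{CR}=\{\rho(i)\}$ is the reactant complex set. The stoichiometric subspace is $S=\mathrm{span}\{y_{\rho'(i)}-y_{\rho(i)}\}$. Linkage classes are the connected components of the underlying undirected reaction graph; weakly reversible means every reaction $\mathcal C_a\to\mathcal C_b$ admits a directed path from $\mathcal C_b$ back to $\mathcal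 C_a$. A translation of $\mathcal N$ is $\tilde{\mathcal N}=(\mathcal S,\tilde{\mathcal C},\mathcal{CR}_K,\tilde{\mathcal R})$, where $(\mathcal S,\tilde{\mathcal C},\tilde{\mathcal R})$ is a chemical reaction network with complexes $\tilde{\mathcal C}_j$ (vectors $\tilde y_j$), reactions $\tilde{\mathcal R}_l:\tilde{\mathcal C}_{\tilde\rho(l)}\to\tilde{\mathcal C}_{\tilde\rho'(l)}$, reactant complex set $\tilde{\mathcal{CR}}$, and $\mathcal{CR}_K\subseteq\mathcal{CR}$, such that: (1) there is a bijection $h_1:\mathcal R\to\tilde{\mathcal R}$ with $\tilde y_{\tilde\rho'(h_1(i))}-\tilde y_{\tilde\rho(h_1(i))}=y_{\rho'(i)}-y_{\rho(i)}$; (2) there is a surjection $h_2:\mathcal{CR}\to\tilde{\mathcal{CR}}$ with $h_2(\rho(i))=\tilde\rho(h_1(i))$; (3) for each $j\in\tilde{\mathcal{CR}}$, $\mathcal{CR}_K$ contains exactly one element $\kappa(j)$ of $h_2^{-1}(j)$, the kinetic complex of $\tilde{\mathcal C}_j$ (non-reactant complexes of $\tilde{\mathcal N}$ get arbitrary kinetic complexes from $\mathcal{CR}_K$). The translation is strong if $\tilde{\mathcal N}$ is weakly reversible. The stoichiometric subspace of $\tilde{\mathcal N}$ is $\mathrm{span}\{\tilde y_{\tilde\rho'(l)}-\tilde y_{\tilde\rho(l)}\}$, and its kinetic-order subspace is $\tilde S=\mathrm{span}\{y_{\kappa(\tilde\rho'(l))}-y_{\kappa(\tilde\rho(l))}\}$.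 *)

(* Defs.v *)
From HB Require Import structures.
From mathcomp Require Import all_boot all_order all_algebra.
From mathcomp Require Export reals.
Set Implicit Arguments. Unset Strict Implicit. Unset Printing Implicit Defensive.
Import GRing.Theory.
Local Open Scope ring_scope.

(* A CRN with m species, n complexes, r reactions:
   y i : the stoichiometric vector (in Z_{>=0}^m) of complex i,
   reaction k is  C_(rho k) -> C_(rho' k). *)

Definition is_crn (m n r : nat) (y : 'I_n -> {ffun 'I_m -> nat})
  (rho rho' : 'I_r -> 'I_n) : Prop :=
  [/\ injective y,
      (forall s : 'I_m, exists i : 'I_n, (0 < y i s)%N),
      (forall c : 'I_n, exists k : 'I_r, rho k = c \/ rho' k = c)
    & (forall k : 'I_r, rho k != rho' k)].

Definition reactants (n r : nat) (rho : 'I_r -> 'I_n) : {set 'I_n} :=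
  [set rho k | k : 'I_r].

Definition cvec (R : realType) (m n : nat) (y : 'I_n -> {ffun 'I_m -> nat})
  (i : 'I_n) : 'rV[R]_m := \row_(j < m) ((y i j)%:R).

Definition stoich_subspace (R : realType) (m n r : nat)
  (y : 'I_n -> {ffun 'I_m -> nat}) (rho rho' : 'I_r -> 'I_n) : {vspace 'rV[R]_m} :=
  <<[seq cvec R y (rho' k) - cvec R y (rho k) | k <- enum 'I_r]>>%VS.

Definition reacts (n r : nat) (rho rho' : 'I_r -> 'I_n) : rel 'I_n :=
  fun a b => [exists k : 'I_r, (rho k == a) && (rho' k == b)].

Definition weakly_reversible (n r : nat) (rho rho' : 'I_r -> 'I_n) : Prop :=
  forall k : 'I_r, connect (reacts rho rho') (rho' k) (rho k).

Definition ureacts (n r : nat) (rho rho' : 'I_r -> 'I_n) : rel 'I_n :=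
  fun a b => reacts rho rho' a b || reacts rho rho' b a.

Definition linkage_classes (n r : nat) (rho rho' : 'I_r -> 'I_n) : {set {set 'I_n}} :=
  [set [set b | connect (ureacts rho rho') a b] | a : 'I_n].

(* Nt = (S, Ct, CR_K, Rt) is a translation of N = (S, C, R), with maps
   h1 : R -> Rt, h2 : CR -> CRt (given as a total map, only its values on CR matter),
   and kappa : Ct -> CR_K assigning kinetic complexes. *)
Definition is_translation (m n r nt rt : nat)
  (y : 'I_n -> {ffun 'I_m -> nat}) (rho rho' : 'I_r -> 'I_n)
  (yt : 'I_nt -> {ffun 'I_m -> nat}) (rhot rhot' : 'I_rt -> 'I_nt)
  (CRK : {set 'I_n}) (h1 : 'I_r -> 'I_rt) (h2 : 'I_n -> 'I_nt)
  (kappa : 'I_nt -> 'I_n) : Prop :=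
  [/\ is_crn y rho rho' & is_crn yt rhot rhot'] /\
  [/\ bijective h1 &
      (forall (k : 'I_r) (s : 'I_m),
          (yt (rhot' (h1 k)) s)%:Z - (yt (rhot (h1 k)) s)%:Z
          = (y (rho' k) s)%:Z - (y (rho k) s)%:Z)] /\
  [/\ h2 @: reactants rho = reactants rhot &
      (forall k : 'I_r, h2 (rho k) = rhot (h1 k))] /\
  [/\ CRK \subset reactants rho,
      (forall j, j \in reactants rhot ->
         [/\ kappa j \in CRK, h2 (kappa j) = j &
             forall p, p \in CRK -> h2 p = j -> p = kappa j])
    & (forall j, kappa j \in CRK)].

Definition kinetic_order_subspace (R : realType) (m n nt rt : nat)
  (y : 'I_n -> {ffun 'I_m -> nat}) (rhot rhot' : 'I_rt -> 'I_nt)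
  (kappa : 'I_nt -> 'I_n) : {vspace 'rV[R]_m} :=
  <<[seq cvec R y (kappa (rhot' l)) - cvec R y (kappa (rhot l)) | l <- enum 'I_rt]>>%VS.

Definition CRK_pairs_span (R : realType) (m n nt rt : nat)
  (y : 'I_n -> {ffun 'I_m -> nat}) (rhot rhot' : 'I_rt -> 'I_nt)
  (CRK : {set 'I_n}) (h2 : 'I_n -> 'I_nt) : {vspace 'rV[R]_m} :=
  <<[seq cvec R y pq.1 - cvec R y pq.2 | pq <- enum [set: ('I_n * 'I_n)%type] &
       [&& pq.1 \in CRK, pq.2 \in CRK &
          [exists L in linkage_classes rhot rhot', (h2 pq.1 \in L) && (h2 pq.2 \in L)]]]>>%VS.

(* Main.v *)
Require Import Defs.
From HB Require Import structures.
From mathcomp Require Import all_boot all_order all_algebra.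
From mathcomp Require Import reals.
Import GRing.Theory.
Local Open Scope ring_scope.

Theorem lemma4p4 (R : realType) (m n r nt rt : nat)
  (y : 'I_n -> {ffun 'I_m -> nat}) (rho rho' : 'I_r -> 'I_n)
  (yt : 'I_nt -> {ffun 'I_m -> nat}) (rhot rhot' : 'I_rt -> 'I_nt)
  (CRK : {set 'I_n}) (h1 : 'I_r -> 'I_rt) (h2 : 'I_n -> 'I_nt)
  (kappa : 'I_nt -> 'I_n) :
  is_translation y rho rho' yt rhot rhot' CRK h1 h2 kappa ->
  weakly_reversible rhot rhot' ->
  stoich_subspace R y rho rho' = stoich_subspace R yt rhot rhot' /\
  kinetic_order_subspace R y rhot rhot' kappa =
  CRK_pairs_span R y rhot rhot' CRK h2.
Proof.
move=> [[_ Hcrn] [[Hbij Hvec] [[Himg Hh2] [HCRK Hkap HkapT]]]] WR.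
move: Hcrn => [_ _ Hcov Hne].
case: Hbij => g h1K gK.
have Egen : forall k, cvec R y (rho' k) - cvec R y (rho k)
   = cvec R yt (rhot' (h1 k)) - cvec R yt (rhot (h1 k)).
  move=> k; apply/matrixP => i j; rewrite !mxE.
  have := congr1 (fun z : int => z%:~R : R) (Hvec k j).
  by rewrite !intrB.
split.
  apply/subv_anti/andP; split; apply/span_subvP => v /mapP [k _ ->].
    by rewrite Egen; apply: memv_span; apply: map_f; rewrite mem_enum.
  by rewrite -(gK k) -Egen; apply: memv_span; apply: map_f; rewrite mem_enum.
have allR : forall j, j \in reactants rhot.
  move=> j; have [k [<-|<-]] := Hcov j; first by apply: imset_f.
  have := WR k; move/connectP => [p pth Hl].
  case: p pth Hl => [|z p] /=; first by move=> _ E; have := Hne k; rewrite E eqxx.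
  by move=> /andP [/existsP [k' /andP [/eqP <- _]] _] _; apply: imset_f.
have h2K : forall j, h2 (kappa j) = j by move=> j; have [] := Hkap j (allR j).
have kapK : forall p, p \in CRK -> p = kappa (h2 p).
  by move=> p Hp; have [_ _ H] := Hkap (h2 p) (allR _); exact: H.
set K := kinetic_order_subspace R y rhot rhot' kappa.
have edge : forall l, cvec R y (kappa (rhot' l)) - cvec R y (kappa (rhot l)) \in K.
  by move=> l; apply: memv_span; apply: map_f; rewrite mem_enum.
have pathK : forall a b, connect (ureacts rhot rhot') a b ->
    cvec R y (kappa b) - cvec R y (kappa a) \in K.
  move=> a b /connectP [p pth ->] {b}.
  elim: p a pth => [|z p IH] a /=; first by rewrite subrr mem0v.
  move=> /andP [ea pz].
  have -> : cvec R y (kappa (last z p)) - cvec R y (kappa a) =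
    (cvec R y (kappa (last z p)) - cvec R y (kappa z)) + (cvec R y (kappa z) - cvec R y (kappa a)).
    by rewrite addrA subrK.
  apply: memvD; first exact: IH.
  case/orP: ea => /existsP [k /andP [/eqP E1 /eqP E2]].
    by rewrite -E1 -E2; apply: edge.
  by rewrite -E1 -E2 -opprB memvN; apply: edge.
have symU : connect_sym (ureacts rhot rhot').
  by apply: sym_connect_sym => a b; rewrite /ureacts orbC.
apply/subv_anti/andP; split; apply/span_subvP => v /mapP [x Hx ->].
  apply: memv_span; rewrite mem_enum in Hx.
  apply/mapP; exists (kappa (rhot' x), kappa (rhot x)) => //.
  rewrite mem_filter /= mem_enum in_setT andbT !HkapT /=.
  apply/existsP; exists [set b | connect (ureacts rhot rhot') (rhot x) b].
  rewrite imset_f //= !inE !h2K connect0 andbT.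
  by apply: connect1; rewrite /ureacts; apply/orP; left; apply/existsP; exists x; rewrite !eqxx.
move: Hx; rewrite mem_filter => /andP [/and3P [Hp Hq /existsP [L /andP [HL /andP [H1 H2]]]] _].
case/imsetP: HL => a _ EL; rewrite EL !inE in H1 H2.
rewrite (kapK _ Hp) (kapK _ Hq); apply: pathK.
by rewrite symU in H2; exact: connect_trans H2 H1.
Qed.
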